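(* The octonionic hyperbolic plane $\mathbb OH^2=\{(u,v)\in\mathbb O^2:|u|^2+|v|^2<1\}$, equipped with the symmetric bilinear form whose quadratic form on tangent vectors $(du,dv)=(\xi,\eta)$ is $$ds^2=\frac{|\xi|^2(1-|v|^2)+|\eta|^2(1-|u|^2)+2\mathrm{Re}\big[(u\bar v)(\eta\bar\xi)\big]}{(1-|u|^2-|v|^2)^2},$$ is a $16$-dimensional simply connected Riemannian manifold (in particular this form is positive definite at every point).
   Context: Octonions $\mathbb O=\mathbb H\oplus\mathbb H$ with product $(q_1,q_2)(p_1,p_2)=(q_1p_1-\bar p_2q_2,\ p_2q_1+q_2\bar p_1)$, conjugation $\overline{(q_1,q_2)}=(\bar q_1,-q_2)$, $\langle a,b\rangle=\mathrm{Re}(a\bar b)$, $|a|^2=\langle a,a\rangle$; $\mathbb O^2$ is identified with $\mathbb R^{16}$. *)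

(* Defs.v *)
From HB Require Import structures.
From mathcomp Require Import all_boot all_order all_algebra.
From mathcomp Require Import all_classical all_reals all_analysis.
Set Implicit Arguments. Unset Strict Implicit. Unset Printing Implicit Defensive.
Import Order.TTheory GRing.Theory Num.Theory.
Import numFieldNormedType.Exports.
Local Open Scope classical_set_scope.
Local Open Scope ring_scope.

Section Octonions.
Variable R : realType.

(** Quaternions H = R^4, components (a, b, c, d) for a + b i + c j + d k. *)
Record quat := Quat { qa : R; qb : R; qc : R; qd : R }.

Definition qadd (x y : quat) :=
  Quat (qa x + qa y) (qb x + qb y) (qc x + qc y) (qd x + qd y).
Definition qopp (x : quat) := Quat (- qa x) (- qb x) (- qc x) (- qd x).
Definition qsub (x y : quat) := qadd x (qopp y).
Definition qmul (x y : quat) :=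
  Quat (qa x * qa y - qb x * qb y - qc x * qc y - qd x * qd y)
       (qa x * qb y + qb x * qa y + qc x * qd y - qd x * qc y)
       (qa x * qc y - qb x * qd y + qc x * qa y + qd x * qb y)
       (qa x * qd y + qb x * qc y - qc x * qb y + qd x * qa y).
Definition qconj (x : quat) := Quat (qa x) (- qb x) (- qc x) (- qd x).

(** Octonions O = H (+) H (Cayley-Dickson) *)
Record oct := Oct { o1 : quat; o2 : quat }.

Definition oadd (x y : oct) := Oct (qadd (o1 x) (o1 y)) (qadd (o2 x) (o2 y)).
Definition omul (x y : oct) :=
  Oct (qsub (qmul (o1 x) (o1 y)) (qmul (qconj (o2 y)) (o2 x)))
      (qadd (qmul (o2 y) (o1 x)) (qmul (o2 x) (qconj (o1 y)))).
Definition oconj (x : oct) := Oct (qconj (o1 x)) (qopp (o2 x)).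
Definition oRe (x : oct) : R := qa (o1 x).
Definition oinner (x y : oct) : R := oRe (omul x (oconj y)).
Definition onorm2 (x : oct) : R := oinner x x.

(** Identification of O^2 with R^16: coordinates 0..7 give u, 8..15 give v. *)
Definition coord (p : 'rV[R]_16) (k : nat) : R := p ord0 (inord k).
Definition oct_at (p : 'rV[R]_16) (k : nat) : oct :=
  Oct (Quat (coord p k) (coord p (k + 1)) (coord p (k + 2)) (coord p (k + 3)))
      (Quat (coord p (k + 4)) (coord p (k + 5)) (coord p (k + 6)) (coord p (k + 7))).
Definition ucomp (p : 'rV[R]_16) : oct := oct_at p 0.
Definition vcomp (p : 'rV[R]_16) : oct := oct_at p 8.

Definition OH2 : set 'rV[R]_16 :=
  [set p | onorm2 (ucomp p) + onorm2 (vcomp p) < 1].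

Definition ds2 (p X : 'rV[R]_16) : R :=
  let u := ucomp p in let v := vcomp p in
  let xi := ucomp X in let eta := vcomp X in
  (onorm2 xi * (1 - onorm2 v) + onorm2 eta * (1 - onorm2 u)
   + 2 * oRe (omul (omul u (oconj v)) (omul eta (oconj xi))))
  / (1 - onorm2 u - onorm2 v) ^+ 2.

Definition gOH (p X Y : 'rV[R]_16) : R :=
  (ds2 p (X + Y) - ds2 p X - ds2 p Y) / 2.

End Octonions.

Section Geometry.
Variable R : realType.
Local Notation V := 'rV[R]_16.

Definition unit_interval : set R := [set t | 0 <= t <= 1].

Fixpoint iter_dir (vs : seq V) (f : V -> R) : V -> R :=
  match vs with
  | [::] => f
  | v :: vs' => fun x => 'D_v (iter_dir vs' f) x
  end.

Definition smooth_on (U : set V) (f : V -> R) :=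
  forall (vs : seq V) (x : V), U x -> differentiable (iter_dir vs f) x.

Definition path_connected (S : set V) :=
  forall x y, S x -> S y ->
    exists g : R -> V, {within unit_interval, continuous g} /\
      g @` unit_interval `<=` S /\ g 0 = x /\ g 1 = y.

Definition simply_connected (S : set V) :=
  S !=set0 /\ path_connected S /\
  forall f : R -> V,
    {within unit_interval, continuous f} -> f @` unit_interval `<=` S ->
    f 0 = f 1 ->
    exists H : R * R -> V,
      {within unit_interval `*` unit_interval, continuous H} /\
      H @` (unit_interval `*` unit_interval) `<=` S /\
      (forall s, unit_interval s -> H (s, 0) = f s /\ H (s, 1) = f 0) /\
      (forall t, unit_interval t -> H (0, t) = f 0 /\ H (1, t) = f 0).

Definition ebasis (i : 'I_16) : V := \row_(j < 16) (i == j)%:R.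

End Geometry.

(* Main.v *)
Require Import Defs.
From HB Require Import structures.
From mathcomp Require Import all_boot all_order all_algebra.
From mathcomp Require Import all_classical all_reals all_analysis.
From mathcomp Require Import ring lra.
Import Order.TTheory GRing.Theory Num.Theory.
Import numFieldNormedType.Exports.
Local Open Scope classical_set_scope.
Local Open Scope ring_scope.

Section Alg.
Variable R : realType.
Implicit Types x y z A : oct R.

Ltac ocrunch := cbn [qa qb qc qd o1 o2 qmul qsub qadd qopp qconj omul oconj oRe oinner onorm2 oadd].

Definition oscale (a : R) x :=
  Oct (Quat (a * qa (o1 x)) (a * qb (o1 x)) (a * qc (o1 x)) (a * qd (o1 x)))
      (Quat (a * qa (o2 x)) (a * qb (o2 x)) (a * qc (o2 x)) (a * qd (o2 x))).

Lemma onorm2_mul x y : onorm2 (omul x y) = onorm2 x * onorm2 y.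
Proof.
case: x => [[a0 a1 a2 a3] [a4 a5 a6 a7]]; case: y => [[b0 b1 b2 b3] [b4 b5 b6 b7]].
ocrunch; ring.
Qed.

Lemma onorm2_conj x : onorm2 (oconj x) = onorm2 x.
Proof. case: x => [[a0 a1 a2 a3] [a4 a5 a6 a7]]; ocrunch; ring. Qed.

Lemma onorm2E (x0 x1 x2 x3 x4 x5 x6 x7 : R) :
  onorm2 (Oct (Quat x0 x1 x2 x3) (Quat x4 x5 x6 x7)) =
  x0^+2 + x1^+2 + x2^+2 + x3^+2 + x4^+2 + x5^+2 + x6^+2 + x7^+2.
Proof. ocrunch; ring. Qed.

Lemma onorm2_ge0 x : 0 <= onorm2 x.
Proof.
case: x => [[a0 a1 a2 a3] [a4 a5 a6 a7]]; rewrite onorm2E.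
by rewrite !addr_ge0 // sqr_ge0.
Qed.

Lemma oinnerC x y : oinner x y = oinner y x.
Proof.
case: x => [[a0 a1 a2 a3] [a4 a5 a6 a7]]; case: y => [[b0 b1 b2 b3] [b4 b5 b6 b7]].
ocrunch; ring.
Qed.

Lemma oinner_lin a x y z : oinner (oadd (oscale a x) y) z = a * oinner x z + oinner y z.
Proof.
case: x => [[a0 a1 a2 a3] [a4 a5 a6 a7]]; case: y => [[b0 b1 b2 b3] [b4 b5 b6 b7]].
case: z => [[c0 c1 c2 c3] [c4 c5 c6 c7]].
rewrite /oscale; ocrunch; ring.
Qed.

Definition L A x y := oRe (omul A (omul x (oconj y))).

Lemma L_lin1 a A x y z : L A (oadd (oscale a x) y) z = a * L A x z + L A y z.
Proof.
case: x => [[a0 a1 a2 a3] [a4 a5 a6 a7]]; case: y => [[b0 b1 b2 b3] [b4 b5 b6 b7]].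
case: z => [[c0 c1 c2 c3] [c4 c5 c6 c7]].
case: A => [[d0 d1 d2 d3] [d4 d5 d6 d7]].
rewrite /L /oscale; ocrunch; ring.
Qed.

Lemma L_lin2 a A x y z : L A z (oadd (oscale a x) y) = a * L A z x + L A z y.
Proof.
case: x => [[a0 a1 a2 a3] [a4 a5 a6 a7]]; case: y => [[b0 b1 b2 b3] [b4 b5 b6 b7]].
case: z => [[c0 c1 c2 c3] [c4 c5 c6 c7]].
case: A => [[d0 d1 d2 d3] [d4 d5 d6 d7]].
rewrite /L /oscale; ocrunch; ring.
Qed.

Lemma cs8 (x0 x1 x2 x3 x4 x5 x6 x7 y0 y1 y2 y3 y4 y5 y6 y7 : R) :
  (x0*y0 + x1*y1 + x2*y2 + x3*y3 + x4*y4 + x5*y5 + x6*y6 + x7*y7) ^+ 2 <=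
  (x0^+2 + x1^+2 + x2^+2 + x3^+2 + x4^+2 + x5^+2 + x6^+2 + x7^+2) *
  (y0^+2 + y1^+2 + y2^+2 + y3^+2 + y4^+2 + y5^+2 + y6^+2 + y7^+2).
Proof.
rewrite -subr_ge0.
have -> : forall a b : R, a - b = a - b by [].
set S := _ - _.
have -> : S = (x0*y1 - x1*y0)^+2 + (x0*y2 - x2*y0)^+2 + (x0*y3 - x3*y0)^+2 + (x0*y4 - x4*y0)^+2 + (x0*y5 - x5*y0)^+2 + (x0*y6 - x6*y0)^+2 + (x0*y7 - x7*y0)^+2 + (x1*y2 - x2*y1)^+2 + (x1*y3 - x3*y1)^+2 + (x1*y4 - x4*y1)^+2 + (x1*y5 - x5*y1)^+2 + (x1*y6 - x6*y1)^+2 + (x1*y7 - x7*y1)^+2 + (x2*y3 - x3*y2)^+2 + (x2*y4 - x4*y2)^+2 + (x2*y5 - x5*y2)^+2 + (x2*y6 - x6*y2)^+2 + (x2*y7 - x7*y2)^+2 + (x3*y4 - x4*y3)^+2 + (x3*y5 - x5*y3)^+2 + (x3*y6 - x6*y3)^+2 + (x3*y7 - x7*y3)^+2 + (x4*y5 - x5*y4)^+2 + (x4*y6 - x6*y4)^+2 + (x4*y7 - x7*y4)^+2 + (x5*y6 - x6*y5)^+2 + (x5*y7 - x7*y5)^+2 + (x6*y7 - x7*y6)^+2 by rewrite /S; ring.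
by rewrite !addr_ge0 // sqr_ge0.
Qed.

Lemma re_cs x y : oRe (omul x y) ^+ 2 <= onorm2 x * onorm2 y.
Proof.
case: x => [[a0 a1 a2 a3] [a4 a5 a6 a7]]; case: y => [[b0 b1 b2 b3] [b4 b5 b6 b7]].
rewrite !onorm2E.
have := cs8 a0 a1 a2 a3 a4 a5 a6 a7 b0 (-b1) (-b2) (-b3) (-b4) (-b5) (-b6) (-b7).
have E : oRe (omul (Oct (Quat a0 a1 a2 a3) (Quat a4 a5 a6 a7)) (Oct (Quat b0 b1 b2 b3) (Quat b4 b5 b6 b7)))
   = a0 * b0 + a1 * - b1 + a2 * - b2 + a3 * - b3 + a4 * - b4 + a5 * - b5 + a6 * - b6 + a7 * - b7.
  by ocrunch; ring.
by rewrite E !sqrrN.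
Qed.


Lemma key (U W a b r : R) : 0 <= U -> 0 <= W -> U + W < 1 -> 0 <= a -> 0 <= b ->
  0 < a + b -> r ^+ 2 <= U * W * (b * a) -> 0 < a * (1 - W) + b * (1 - U) + 2 * r.
Proof.
move=> U0 W0 UW a0 b0 ab hr.
have hS : 0 < a * (1 - W) + b * (1 - U) by nra.
rewrite ltNge; apply/negP => hN.
have h1 : (a * (1 - W) + b * (1 - U)) ^+ 2 <= 4 * r ^+ 2 by nra.
have h2 : 4 * (a * b) * ((1 - U) * (1 - W)) <= (a * (1 - W) + b * (1 - U)) ^+ 2.
  have := sqr_ge0 (a * (1 - W) - b * (1 - U)); nra.
have h3 : a * b * (1 - U - W) <= 0 by nra.
have h4 : a * b = 0 by nra.
have h5 : r = 0 by nra.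
by move: hN; rewrite h5; lra.
Qed.

Lemma ucomp_coords (X : 'rV[R]_16) : ucomp X =
  Oct (Quat (Defs.coord X 0%N) (Defs.coord X 1%N) (Defs.coord X 2%N) (Defs.coord X 3%N))
      (Quat (Defs.coord X 4%N) (Defs.coord X 5%N) (Defs.coord X 6%N) (Defs.coord X 7%N)).
Proof. by []. Qed.

Lemma vcomp_coords (X : 'rV[R]_16) : vcomp X =
  Oct (Quat (Defs.coord X 8%N) (Defs.coord X 9%N) (Defs.coord X 10%N) (Defs.coord X 11%N))
      (Quat (Defs.coord X 12%N) (Defs.coord X 13%N) (Defs.coord X 14%N) (Defs.coord X 15%N)).
Proof. by []. Qed.

Lemma sqr_pos (x : R) : x != 0 -> 0 < x ^+ 2.
Proof. by move=> h; rewrite lt_def sqrf_eq0 h sqr_ge0. Qed.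

Lemma norm_pos (X : 'rV[R]_16) : X != 0 -> 0 < onorm2 (ucomp X) + onorm2 (vcomp X).
Proof.
move=> X0.
have [j Hj] : exists j, X ord0 j != 0.
  apply: contrapT => H; move/eqP: X0; apply; apply/rowP => j; rewrite mxE.
  by case: (eqVneq (X ord0 j) 0) => // Hj; exfalso; apply: H; exists j.
have E : X ord0 j = Defs.coord X j by rewrite /Defs.coord inord_val.
rewrite E in Hj; move: (nat_of_ord j) (ltn_ord j) Hj => n.
rewrite ucomp_coords vcomp_coords !onorm2E.
have h0 := sqr_ge0 (Defs.coord X 0%N).
have h1 := sqr_ge0 (Defs.coord X 1%N).
have h2 := sqr_ge0 (Defs.coord X 2%N).
have h3 := sqr_ge0 (Defs.coord X 3%N).
have h4 := sqr_ge0 (Defs.coord X 4%N).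
have h5 := sqr_ge0 (Defs.coord X 5%N).
have h6 := sqr_ge0 (Defs.coord X 6%N).
have h7 := sqr_ge0 (Defs.coord X 7%N).
have h8 := sqr_ge0 (Defs.coord X 8%N).
have h9 := sqr_ge0 (Defs.coord X 9%N).
have h10 := sqr_ge0 (Defs.coord X 10%N).
have h11 := sqr_ge0 (Defs.coord X 11%N).
have h12 := sqr_ge0 (Defs.coord X 12%N).
have h13 := sqr_ge0 (Defs.coord X 13%N).
have h14 := sqr_ge0 (Defs.coord X 14%N).
have h15 := sqr_ge0 (Defs.coord X 15%N).
do 16 (case: n => [|n]; [move=> _ Hn; have Hp := sqr_pos _ Hn|]; try lra).
by [].
Qed.

Lemma ucompL (a : R) (X Y : 'rV[R]_16) : ucomp (a *: X + Y) = oadd (oscale a (ucomp X)) (ucomp Y).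
Proof. by rewrite /ucomp /oct_at /Defs.coord !mxE. Qed.
Lemma vcompL (a : R) (X Y : 'rV[R]_16) : vcomp (a *: X + Y) = oadd (oscale a (vcomp X)) (vcomp Y).
Proof. by rewrite /vcomp /oct_at /Defs.coord !mxE. Qed.

Definition beta (p X Y : 'rV[R]_16) :=
  (oinner (ucomp X) (ucomp Y) * (1 - onorm2 (vcomp p))
   + oinner (vcomp X) (vcomp Y) * (1 - onorm2 (ucomp p))
   + L (omul (ucomp p) (oconj (vcomp p))) (vcomp X) (ucomp Y)
   + L (omul (ucomp p) (oconj (vcomp p))) (vcomp Y) (ucomp X))
  / (1 - onorm2 (ucomp p) - onorm2 (vcomp p)) ^+ 2.

Lemma ds2_beta p X : ds2 p X = beta p X X.
Proof. rewrite /ds2 /beta /L /onorm2 /=; ring. Qed.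

Lemma beta_sym p X Y : beta p X Y = beta p Y X.
Proof.
rewrite /beta [oinner (ucomp X) _]oinnerC [oinner (vcomp X) _]oinnerC; ring.
Qed.

Lemma beta_lin p a X Y Z : beta p (a *: X + Y) Z = a * beta p X Z + beta p Y Z.
Proof.
rewrite /beta ucompL vcompL oinner_lin oinner_lin L_lin1 L_lin2; ring.
Qed.

Lemma gOH_beta p X Y : gOH p X Y = beta p X Y.
Proof.
rewrite /gOH !ds2_beta.
have E : X + Y = 1 *: X + Y by rewrite scale1r.
rewrite {1}E beta_lin (beta_sym p X) (beta_sym p Y) {1}E beta_lin {1}E beta_lin.
rewrite (beta_sym p Y X); by field.
Qed.

Lemma ds2_pos p X : @OH2 R p -> X != 0 -> 0 < ds2 p X.
Proof.
rewrite /OH2 /= => Hp X0.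
rewrite /ds2 /=; apply: divr_gt0; last by apply: exprn_gt0; lra.
apply: key.
- exact: onorm2_ge0.
- exact: onorm2_ge0.
- exact: Hp.
- exact: onorm2_ge0.
- exact: onorm2_ge0.
- exact: norm_pos.
- apply: le_trans (re_cs _ _) _.
  by rewrite !onorm2_mul !onorm2_conj.
Qed.

End Alg.
Arguments oscale {R}.
Arguments onorm2_ge0 {R}.
Arguments ucompL {R}.
Arguments vcompL {R}.
Arguments ucomp_coords {R}.
Arguments vcomp_coords {R}.
Arguments onorm2E {R}.
Arguments onorm2_mul {R}.
Arguments onorm2_conj {R}.
Arguments oinnerC {R}.
Arguments L {R}.
Arguments gOH_beta {R}.
Arguments beta {R}.
Arguments ds2_beta {R}.
Arguments beta_lin {R}.
Arguments beta_sym {R}.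
Arguments ds2_pos {R}.
Section Smooth.
Variable R : realType.
Local Notation V := 'rV[R]_16.

Lemma near0_diff (h : V -> R) x : (\forall y \near x, h y = 0) -> differentiable h x.
Proof.
move=> hx.
have hx0 : h x = 0 by exact: (nbhs_singleton hx).
have E : h \o shift x = cst (h x) + \0 +o_ 0 id.
  apply/eqaddoP => _/posnumP[e].
  have : \forall k \near (0 : V), h (k + x) = 0.
    rewrite (near_shift x) /=; near=> y => /=; rewrite sub0r addrNK; near: y; exact: hx.
  apply: filterS => k hk.
  change (`|h (k + x) - (h x + 0)| <= e%:num * `|k|).
  by rewrite hk hx0 !addr0 subr0 normr0 mulr_ge0.
apply/diff_locallyP; rewrite (diff_unique _ E); last exact: cst_continuous.
split; [exact: cst_continuous|exact: E].
Unshelve. all: by end_near. Qed.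


Lemma near_eq_diff (f g : V -> R) x :
  (\forall y \near x, f y = g y) -> differentiable f x -> differentiable g x.
Proof.
move=> fg df.
have -> : g = f + (g - f) by apply/funext => y; rewrite !fctE addrC subrK.
apply: differentiableD => //; apply: near0_diff.
by apply: filterS fg => y fy; rewrite !fctE fy subrr.
Qed.

Inductive good (U : set V) : (V -> R) -> Prop :=
| g_cst c : good U (fun _ => c)
| g_coord k : good U (fun p => Defs.coord p k)
| g_add f g : good U f -> good U g -> good U (fun p => f p + g p)
| g_opp f : good U f -> good U (fun p => - f p)
| g_mul f g : good U f -> good U g -> good U (fun p => f p * g p)
| g_inv f : good U f -> (forall x, U x -> f x != 0) -> good U (fun p => (f p)^-1).

Lemma good_diff U f : good U f -> forall x, U x -> differentiable f x.
Proof.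
elim=> {f}.
- move=> c x _; exact: differentiable_cst.
- move=> k x _; exact: differentiable_coord.
- move=> f g _ hf _ hg x Ux; exact: differentiableD (hf x Ux) (hg x Ux).
- move=> f _ hf x Ux; exact: differentiableN (hf x Ux).
- move=> f g _ hf _ hg x Ux; exact: differentiableM (hf x Ux) (hg x Ux).
- move=> f _ hf nz x Ux; exact: differentiableV (hf x Ux) (nz x Ux).
Qed.

Arguments good_diff {U f}.

Lemma derive_coord k (x v : V) : 'D_v (fun p : V => Defs.coord p k) x = Defs.coord v k.
Proof.
have @f : {linear V -> R}.
  by exists (fun N : V => N ord0 (inord k)); do 2![eexists]; do ?[constructor];
     rewrite ?mxE// => ? *; rewrite ?mxE//; move=> ?; rewrite !mxE.
rewrite (_ : (fun _ => _) = f) //.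
rewrite deriveE; last exact/linear_differentiable/coord_continuous.
by rewrite diff_lin //; exact: coord_continuous.
Qed.

Lemma good_deriv U f : good U f -> forall v, exists g, good U g /\
  forall x, U x -> 'D_v f x = g x.
Proof.
move=> gf v; elim: gf => {f}.
- move=> c; exists (fun _ => 0); split; first exact: g_cst.
  by move=> x _; exact: derive_cst.
- move=> k; exists (fun _ => Defs.coord v k); split; first exact: g_cst.
  by move=> x _; exact: derive_coord.
- move=> f g gf [F [gF hF]] gg [G [gG hG]]; exists (fun p => F p + G p).
  split; first exact: g_add.
  move=> x Ux; rewrite -hF // -hG //.
  have := deriveD (diff_derivable (good_diff gf x Ux)) (diff_derivable (good_diff gg x Ux)).
  by [].
- move=> f gf [F [gF hF]]; exists (fun p => - F p).
  split; first exact: g_opp.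
  move=> x Ux; rewrite -hF //.
  have := deriveN (diff_derivable (good_diff gf x Ux)).
  by [].
- move=> f g gf [F [gF hF]] gg [G [gG hG]]; exists (fun p => f p * G p + g p * F p).
  split; first by apply: g_add; apply: g_mul.
  move=> x Ux; rewrite -hF // -hG //.
  have := deriveM (diff_derivable (good_diff gf x Ux)) (diff_derivable (good_diff gg x Ux)).
  by [].
- move=> f gf [F [gF hF]] nz; exists (fun p => - ((f p)^-1 * (f p)^-1) * F p).
  split; first by apply: g_mul => //; apply: g_opp; apply: g_mul; apply: g_inv.
  move=> x Ux; rewrite -hF //.
  rewrite (deriveV (nz x Ux) (diff_derivable (good_diff gf x Ux))).
  by rewrite expr2 invfM.
Qed.

Arguments good_deriv {U f}.

Lemma iter_good U f : open U -> good U f -> forall vs, exists g, good U g /\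
  forall x, U x -> iter_dir vs f x = g x.
Proof.
move=> oU gf; elim=> [|v vs [g [gg hg]]].
  by exists f; split.
have [G [gG hG]] := good_deriv gg v.
exists G; split => // x Ux /=.
rewrite -hG //; apply: near_eq_derive.
have : \forall y \near x, U y by apply: open_nbhs_nbhs; split.
by apply: filterS => y Uy; apply: hg.
Qed.

Arguments iter_good {U f}.

Lemma good_smooth U f : open U -> good U f -> smooth_on U f.
Proof.
move=> oU gf vs x Ux.
have [g [gg hg]] := iter_good oU gf vs.
apply: (@near_eq_diff g); last exact: good_diff gg x Ux.
have : \forall y \near x, U y by apply: open_nbhs_nbhs; split.
by apply: filterS => y Uy; rewrite hg.
Qed.

End Smooth.
Arguments good {R}.
Arguments g_cst {R U}.
Arguments g_coord {R U}.
Arguments g_add {R U f g}.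
Arguments g_opp {R U f}.
Arguments g_mul {R U f g}.
Arguments g_inv {R U f}.
Arguments good_diff {R U f}.
Arguments good_smooth {R U f}.

Section Reif.
Variable R : realType.
Local Notation V := 'rV[R]_16.

Lemma g_exp2 U (f : V -> R) : good U f -> good U (fun p => f p ^+ 2).
Proof. by move=> h; apply: g_mul. Qed.

Ltac reify :=
  match goal with
  | |- good _ (fun _ => ?c) => apply: g_cst
  | |- good _ (fun p => Defs.coord p _) => apply: g_coord
  | |- good _ (fun p => @?f p + @?g p) => apply: (g_add (f := f) (g := g)); [reify|reify]
  | |- good _ (fun p => - @?f p) => apply: (g_opp (f := f)); reify
  | |- good _ (fun p => @?f p * @?g p) => apply: (g_mul (f := f) (g := g)); [reify|reify]
  | |- good _ (fun p => @?f p ^+ 2) => apply: (g_exp2 _ f); reify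
  end.

Ltac ocrunch := cbn [qa qb qc qd o1 o2 qmul qsub qadd qopp qconj omul oconj oRe oinner onorm2 oadd ucomp vcomp oct_at L].

Lemma Dinv_good : good (@OH2 R) (fun p : V => ((1 - onorm2 (ucomp p) - onorm2 (vcomp p)) ^+ 2)^-1).
Proof.
apply: g_inv; last first.
  move=> x; rewrite /OH2 /= => h; rewrite expf_neq0 //; apply/eqP => h'; lra.
ocrunch; reify.
Qed.

Lemma gOH_good (X Y : V) : good (@OH2 R) (fun p : V => gOH p X Y).
Proof.
have -> : (fun p : V => gOH p X Y) = (fun p => beta p X Y).
  by apply/funext => p; rewrite gOH_beta.
rewrite /beta; apply: (g_mul (f := fun p => _)); last exact: Dinv_good.
ocrunch; reify.
Qed.

Lemma F_good : good (@setT V) (fun p : V => onorm2 (ucomp p) + onorm2 (vcomp p)).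
Proof. ocrunch; reify. Qed.

End Reif.

Section Topo.
Variable R : realType.
Local Notation V := 'rV[R]_16.
Local Notation I := (@unit_interval R).

Lemma ucompZ (a : R) (X : V) : ucomp (a *: X) = oscale a (ucomp X).
Proof. by rewrite /ucomp /oct_at /Defs.coord !mxE. Qed.
Lemma vcompZ (a : R) (X : V) : vcomp (a *: X) = oscale a (vcomp X).
Proof. by rewrite /vcomp /oct_at /Defs.coord !mxE. Qed.

Lemma onorm2_conv (t : R) (x y : oct R) :
  (1 - t) * onorm2 x + t * onorm2 y - onorm2 (oadd (oscale (1 - t) x) (oscale t y))
  = t * (1 - t) * onorm2 (oadd x (oscale (-1) y)).
Proof.
case: x => [[a0 a1 a2 a3] [a4 a5 a6 a7]]; case: y => [[b0 b1 b2 b3] [b4 b5 b6 b7]].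
rewrite /oscale; cbn [qa qb qc qd o1 o2 qmul qsub qadd qopp qconj omul oconj oRe oinner onorm2 oadd]; ring.
Qed.

Lemma OH2_conv (x y : V) (t : R) : @OH2 R x -> @OH2 R y -> 0 <= t <= 1 ->
  @OH2 R ((1 - t) *: x + t *: y).
Proof.
rewrite /OH2 /= => hx hy /andP[t0 t1].
rewrite ucompL vcompL ucompZ vcompZ.
have h1 := onorm2_conv t (ucomp x) (ucomp y).
have h2 := onorm2_conv t (vcomp x) (vcomp y).
have h3 : 0 <= t * (1 - t) * onorm2 (oadd (ucomp x) (oscale (-1) (ucomp y))).
  by rewrite !mulr_ge0 ?onorm2_ge0 // subr_ge0.
have h4 : 0 <= t * (1 - t) * onorm2 (oadd (vcomp x) (oscale (-1) (vcomp y))).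
  by rewrite !mulr_ge0 ?onorm2_ge0 // subr_ge0.
set Sx := onorm2 (ucomp x) + onorm2 (vcomp x) in hx.
set Sy := onorm2 (ucomp y) + onorm2 (vcomp y) in hy.
set m := Num.min (1 - Sx) (1 - Sy).
have m0 : 0 < m by rewrite lt_min !subr_gt0 hx hy.
have k1 : (1 - t) * m <= (1 - t) * (1 - Sx) by rewrite ler_wpM2l ?subr_ge0 // ge_min lexx.
have k2 : t * m <= t * (1 - Sy) by rewrite ler_wpM2l // ge_min lexx orbT.
rewrite /Sx /Sy in k1 k2; lra.
Qed.

Lemma F_cont : continuous (fun p : V => onorm2 (ucomp p) + onorm2 (vcomp p)).
Proof.
move=> x; apply: differentiable_continuous; exact: (good_diff (F_good R) x).
Qed.

Lemma OH2_open : open (@OH2 R).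
Proof.
have -> : @OH2 R = (fun p : V => onorm2 (ucomp p) + onorm2 (vcomp p)) @^-1` [set r | r < 1].
  by [].
apply: open_comp; last exact: open_lt.
move=> x _; exact: F_cont.
Qed.

Lemma fst_within (A B : set R) (z : R * R) :
  fst @ within (A `*` B) (nbhs z) --> within A (nbhs z.1).
Proof.
move=> P /= hP.
have h1 := @cvg_fst R R (nbhs z.1) (nbhs z.2) _ _ hP.
have h2 : \forall w \near z, A w.1 -> P w.1 by apply: h1; exact: nbhs_filter.
by apply: filterS h2 => w h [Aw _]; exact: h Aw.
Qed.

Lemma snd_within (A B : set R) (z : R * R) :
  snd @ within (A `*` B) (nbhs z) --> within B (nbhs z.2).
Proof.
move=> P /= hP.
have h1 := @cvg_snd R R (nbhs z.1) (nbhs z.2) _ _ hP.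
have h2 : \forall w \near z, B w.2 -> P w.2 by apply: h1; exact: nbhs_filter.
by apply: filterS h2 => w h [_ Aw]; exact: h Aw.
Qed.

Lemma OH2_sc : simply_connected (@OH2 R).
Proof.
have O0 : @OH2 R 0.
  rewrite /OH2 /= ucomp_coords vcomp_coords !onorm2E /Defs.coord !mxE.
  rewrite expr0n /=; lra.
split; first by exists 0.
split.
  move=> x y hx hy; exists (fun t => (1 - t) *: x + t *: y); split.
    apply: continuous_subspaceT => t.
    apply: cvgD; apply: cvgZ; try exact: cvg_cst.
      apply: cvgB; [exact: cvg_cst|exact: cvg_id].
    exact: cvg_id.
  split; first by move=> _ [t It <-]; apply: OH2_conv.
  by split; rewrite ?subr0 ?subrr ?scale0r ?scale1r ?addr0 ?add0r.
move=> f cf fI f01.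
exists (fun w => (1 - w.2) *: f w.1 + w.2 *: f 0); split.
  apply/subspace_continuousP => z [Iz1 Iz2].
  have cf1 : f @ within I (nbhs z.1) --> f z.1 by move/subspace_continuousP: cf; apply.
  have c2 : snd @ within (I `*` I) (nbhs z) --> z.2.
    apply: cvg_trans (snd_within _ _ _) _; exact: cvg_within.
  apply: cvgD; apply: cvgZ.
  - apply: cvgB; [exact: cvg_cst|exact: c2].
  - exact: cvg_comp (fst_within _ _ _) cf1.
  - exact: c2.
  - exact: cvg_cst.
have I0 : I 0 by rewrite /unit_interval /= lexx ler01.
have I1 : I 1 by rewrite /unit_interval /= lexx ler01.
split.
  move=> _ [[s t] [Is It] <-] /=.
  apply: OH2_conv => //; [exact: fI|exact: fI].
split.
  by move=> s Is; rewrite /= ?subr0 ?subrr ?scale0r ?scale1r ?addr0 ?add0r.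
by move=> t It; rewrite /= -f01 -scalerDl subrK scale1r.
Qed.

End Topo.

Theorem theorem8p2 (R : realType) :
  (* OH^2 is an open subset of R^16 (hence a 16-dimensional manifold) *)
  open (@OH2 R) /\
  (* which is simply connected *)
  simply_connected (@OH2 R) /\
  (* the metric coefficients g_ij = g(e_i, e_j) are smooth on OH^2 *)
  (forall i j : 'I_16, smooth_on (@OH2 R) (fun p => gOH p (ebasis R i) (ebasis R j))) /\
  (* at every point, g is a symmetric bilinear form whose quadratic
     form is ds^2, and it is positive definite *)
  (forall p : 'rV[R]_16, @OH2 R p ->
     (forall (a : R) (X Y Z : 'rV[R]_16),
        gOH p (a *: X + Y) Z = a * gOH p X Z + gOH p Y Z) /\
     (forall X Y : 'rV[R]_16, gOH p X Y = gOH p Y X) /\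
     (forall X : 'rV[R]_16, gOH p X X = ds2 p X) /\
     (forall X : 'rV[R]_16, X != 0 -> 0 < ds2 p X)).
Proof.
split; first exact: OH2_open.
split; first exact: OH2_sc.
split.
  move=> i j; apply: good_smooth; [exact: OH2_open | exact: gOH_good].
move=> p Hp; split.
  by move=> a X Y Z; rewrite !gOH_beta beta_lin.
split; first by move=> X Y; rewrite !gOH_beta beta_sym.
split; first by move=> X; rewrite gOH_beta ds2_beta.
by move=> X; exact: ds2_pos.
Qed.
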